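(* Let $a,b,c\in\mathbb{R}$ and $P_2:\ell_\infty^2(\mathbb{C})\to\mathbb{C}$, $P_2(z_1,z_2)=az_1^2+bz_2^2+cz_1z_2$. Then $$\|P_2\|=\begin{cases}|a+b|+|c| & \text{if } ab\ge0 \text{ or } |c(a+b)|>4|ab|,\\[2pt] (|a|+|b|)\sqrt{1+\dfrac{c^2}{4|ab|}} & \text{otherwise.}\end{cases}$$
   Context: $\ell_\infty^2(\mathbb{C})$ is $\mathbb{C}^2$ with the sup norm, and $\|P_2\|=\sup\{|P_2(z_1,z_2)|:|z_1|\le1,|z_2|\le1\}$. *)

(* Defs.v *)
From Stdlib Require Import Reals.
Open Scope R_scope.

(* C = R x R, z = (Re z, Im z) *)
Definition C : Type := (R * R)%type.
Definition Cadd (z w : C) : C := (fst z + fst w, snd z + snd w).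
Definition Cmul (z w : C) : C :=
  (fst z * fst w - snd z * snd w, fst z * snd w + snd z * fst w).
Definition RtoC (r : R) : C := (r, 0).
Definition Cmod (z : C) : R := sqrt (fst z ^ 2 + snd z ^ 2).

Definition P2 (a b c : R) (z1 z2 : C) : C :=
  Cadd (Cadd (Cmul (RtoC a) (Cmul z1 z1)) (Cmul (RtoC b) (Cmul z2 z2)))
       (Cmul (RtoC c) (Cmul z1 z2)).

Definition P2_values (a b c : R) (r : R) : Prop :=
  exists z1 z2 : C, Cmod z1 <= 1 /\ Cmod z2 <= 1 /\ r = Cmod (P2 a b c z1 z2).

Definition P2_norm (a b c N : R) : Prop := is_lub (P2_values a b c) N.

(* Main.v *)
Require Import Defs.
From Stdlib Require Import Reals Lra Psatz.
Open Scope R_scope.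

Definition H (a b c s t p : R) : R :=
  4*a*b*p^2 + 2*c*(a*s+b*t)*p + c^2*s*t + (a*s-b*t)^2.

Lemma P2_sq a b c z1 z2 :
  fst (P2 a b c z1 z2) ^ 2 + snd (P2 a b c z1 z2) ^ 2 =
  H a b c (fst z1^2+snd z1^2) (fst z2^2+snd z2^2) (fst z1*fst z2+snd z1*snd z2).
Proof. destruct z1 as [x1 y1], z2 as [x2 y2]; unfold P2, Cadd, Cmul, RtoC, H; simpl; ring. Qed.

Lemma Cmod_le1 z : Cmod z <= 1 -> fst z ^2 + snd z^2 <= 1.
Proof.
  unfold Cmod; intro h.
  assert (h0 : 0 <= fst z ^2 + snd z^2) by nra.
  rewrite <- (pow2_sqrt _ h0).
  assert (0 <= sqrt (fst z ^ 2 + snd z ^ 2)) by apply sqrt_pos. nra.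
Qed.

Lemma scale_le u G M : 0 <= u <= 1 -> G <= M -> 0 <= M -> u^2 * G <= M.
Proof.
  intros hu hG hM. assert (0 <= u^2 <= 1) by nra.
  destruct (Rle_dec 0 G) as [g|g]; [nra|].
  assert (u^2 * G <= 0). { apply Rnot_le_lt in g. nra. } lra.
Qed.

Lemma reduction a b c M :
  (forall x, x^2 <= 1 -> H a b c 1 1 x <= M) ->
  (forall x, x^2 <= 1 -> (a*x^2 + c*x + b)^2 <= M) ->
  (forall x, x^2 <= 1 -> (a + c*x + b*x^2)^2 <= M) ->
  forall s t p, 0 <= s <= 1 -> 0 <= t <= 1 -> p^2 <= s*t -> H a b c s t p <= M.
Proof.
  intros T1 R1 R2.
  assert (M0 : 0 <= M).
  { specialize (R1 0 ltac:(lra)). nra. }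
  assert (G1 : forall r x, 0 <= r <= 1 -> x^2 <= r -> H a b c r 1 x <= M).
  { intros r x hr hx.
    assert (E : (1 - x^2) * H a b c r 1 x =
       (1 - r) * (a*x^2 + c*x + b)^2 + (r - x^2) * H a b c 1 1 x
       + a^2 * (r - x^2) * (r - 1) * (1 - x^2)) by (unfold H; ring).
    destruct (Req_dec (x^2) 1) as [e|ne].
    - assert (r = 1) by lra. subst r. apply T1; lra.
    - assert (A1 := R1 x ltac:(lra)). assert (A2 := T1 x ltac:(lra)).
      assert (0 <= a^2 * (r - x^2) * (1 - r) * (1 - x^2)).
      { apply Rmult_le_pos; [apply Rmult_le_pos; [apply Rmult_le_pos|]|]; nra. }
      assert ((1 - x^2) * H a b c r 1 x <= (1 - x^2) * M) by nra.
      apply (Rmult_le_reg_l (1 - x^2)); nra. }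
  assert (G2 : forall r x, 0 <= r <= 1 -> x^2 <= r -> H a b c 1 r x <= M).
  { intros r x hr hx.
    assert (E : (1 - x^2) * H a b c 1 r x =
       (1 - r) * (a + c*x + b*x^2)^2 + (r - x^2) * H a b c 1 1 x
       + b^2 * (r - x^2) * (r - 1) * (1 - x^2)) by (unfold H; ring).
    destruct (Req_dec (x^2) 1) as [e|ne].
    - assert (r = 1) by lra. subst r. apply T1; lra.
    - assert (A1 := R2 x ltac:(lra)). assert (A2 := T1 x ltac:(lra)).
      assert (0 <= b^2 * (r - x^2) * (1 - r) * (1 - x^2)).
      { apply Rmult_le_pos; [apply Rmult_le_pos; [apply Rmult_le_pos|]|]; nra. }
      assert ((1 - x^2) * H a b c 1 r x <= (1 - x^2) * M) by nra.
      apply (Rmult_le_reg_l (1 - x^2)); nra. }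
  intros s t p hs ht hp.
  destruct (Rle_dec s t) as [st|st].
  - destruct (Req_dec t 0) as [t0|t0].
    + subst t. assert (s = 0) by lra. subst s. assert (p = 0) by nra. subst p.
      unfold H; nra.
    + assert (E : H a b c s t p = t^2 * H a b c (s/t) 1 (p/t)) by (unfold H; field; auto).
      assert (Hg : H a b c (s/t) 1 (p/t) <= M).
      { apply G1.
        - split. unfold Rdiv; apply Rmult_le_pos; [lra| apply Rlt_le, Rinv_0_lt_compat; lra]. apply Rmult_le_reg_r with t; [lra|]. field_simplify; lra.
        - assert (tp : 0 < t) by lra.
          replace ((p/t)^2) with (p^2/(t*t)) by (field; auto).
          apply Rmult_le_reg_r with (t*t); [nra|]. field_simplify; try lra; try nra. }
      rewrite E. apply scale_le; lra.
  - assert (s0 : 0 < s) by lra.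
    assert (E : H a b c s t p = s^2 * H a b c 1 (t/s) (p/s)) by (unfold H; field; lra).
    assert (Hg : H a b c 1 (t/s) (p/s) <= M).
    { apply G2.
      - split. unfold Rdiv; apply Rmult_le_pos; [lra| apply Rlt_le, Rinv_0_lt_compat; lra]. apply Rmult_le_reg_r with s; [lra|]. field_simplify; lra.
      - replace ((p/s)^2) with (p^2/(s*s)) by (field; lra).
        apply Rmult_le_reg_r with (s*s); [nra|]. field_simplify; try lra; try nra. }
    rewrite E. apply scale_le; lra.
Qed.

Lemma absprod u v x : -1 <= x <= 1 -> u*v*x <= Rabs u * Rabs v.
Proof.
  intros hx. rewrite <- Rabs_mult.
  assert (Rabs (u*v*x) <= Rabs (u*v)).
  { rewrite Rabs_mult. assert (Rabs x <= 1) by (apply Rabs_le; lra).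
    assert (0 <= Rabs (u*v)) by apply Rabs_pos. nra. }
  assert (u*v*x <= Rabs (u*v*x)) by apply Rle_abs. lra.
Qed.

Lemma sqabs u : Rabs u ^ 2 = u^2.
Proof. unfold Rabs; destruct (Rcase_abs u); nra. Qed.

Lemma case1_T1 a b c x : a*b >= 0 -> x^2 <= 1 ->
  H a b c 1 1 x <= (Rabs (a+b) + Rabs c)^2.
Proof.
  intros hab hx. unfold H.
  assert (hx' : -1 <= x <= 1) by nra.
  assert ((a-b)^2*(1-x^2) <= (a+b)^2*(1-x^2)) by nra.
  assert (c*(a+b)*x <= Rabs c * Rabs (a+b)) by (apply absprod; lra).
  assert (E: (Rabs (a+b) + Rabs c)^2 = (a+b)^2 + c^2 + 2*Rabs c * Rabs (a+b))
    by (rewrite <- (sqabs (a+b)), <- (sqabs c); ring).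
  rewrite E. nra.
Qed.

Lemma sq_le_of u N : -N <= u <= N -> u^2 <= N^2.
Proof. intros. nra. Qed.

Lemma absx c x : -1 <= x <= 1 -> - Rabs c <= c*x <= Rabs c.
Proof. intros. unfold Rabs; destruct (Rcase_abs c); split; nra. Qed.

Lemma case1_R a b c x : a*b >= 0 -> x^2 <= 1 ->
  (a*x^2 + c*x + b)^2 <= (Rabs (a+b) + Rabs c)^2.
Proof.
  intros hab hx.
  assert (hx' : -1 <= x <= 1) by nra.
  assert (0 <= x^2) by nra.
  assert (C := absx c x hx').
  assert (SG : a >= 0 /\ b >= 0 \/ a <= 0 /\ b <= 0) by nra.
  apply sq_le_of.
  destruct SG as [[ha hb]|[ha hb]].
  - rewrite (Rabs_pos_eq (a+b)) by lra. split; nra.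
  - rewrite (Rabs_left1 (a+b)) by lra. split; nra.
Qed.

Lemma case1_R2 a b c x : a*b >= 0 -> x^2 <= 1 ->
  (a + c*x + b*x^2)^2 <= (Rabs (a+b) + Rabs c)^2.
Proof.
  intros hab hx.
  replace (a + c*x + b*x^2) with (b*x^2 + c*x + a) by ring.
  rewrite Rplus_comm with (r1 := a). apply case1_R; lra.
Qed.

Lemma c2_T1 a b c x : a*b < 0 -> c*(a+b) > -4*a*b -> x^2 <= 1 ->
  H a b c 1 1 x <= (a+b+c)^2.
Proof.
  intros h1 h2 hx. assert (hx' : -1 <= x <= 1) by nra.
  assert (E : (a+b+c)^2 - H a b c 1 1 x = 2*(1-x)*(c*(a+b) - 2*(-a*b)*(1+x))) by (unfold H; ring).
  assert (0 <= (1-x)*(c*(a+b) - 2*(-a*b)*(1+x))).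
  { apply Rmult_le_pos; nra. }
  lra.
Qed.

Lemma c2_L0 a b c x : a > 0 -> b < 0 -> a + b > 0 -> c > 0 -> c*(a+b) > -4*a*b -> x^2 <= 1 ->
  (a*x^2 + c*x + b)^2 <= (a+b+c)^2 /\ (a + c*x + b*x^2)^2 <= (a+b+c)^2.
Proof.
  intros ha hb hab hc hd hx. assert (hx' : -1 <= x <= 1) by nra.
  assert (0 <= x^2) by nra.
  split; apply sq_le_of; split.
  - assert (E : (c+4*a)*((a*x^2 + c*x + b) + (a+b+c)) =
       c*a*(x+1)*(x+3) + c^2*(1+x) + 4*a^2*(x^2+1) + 2*(c*(a+b) + 4*a*b)) by ring.
    assert (0 <= c*a*(x+1)*(x+3)).
    { apply Rmult_le_pos; [apply Rmult_le_pos|]; nra. }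
    assert (0 <= c^2*(1+x)) by nra.
    assert (0 < (c+4*a)*((a*x^2 + c*x + b) + (a+b+c))) by nra.
    assert (0 < (a*x^2 + c*x + b) + (a+b+c)).
    { apply (Rmult_lt_reg_l (c+4*a)); lra. }
    lra.
  - nra.
  - assert (b*x^2 >= b) by nra. nra.
  - assert (c > -4*b) by nra.
    assert (0 <= (1-x)*(c + b*(1+x))) by (apply Rmult_le_pos; nra).
    nra.
Qed.

Lemma c2_norm a b c x : a*b < 0 -> a + b > 0 -> c > 0 -> c*(a+b) > -4*a*b -> x^2 <= 1 ->
  (a*x^2 + c*x + b)^2 <= (a+b+c)^2 /\ (a + c*x + b*x^2)^2 <= (a+b+c)^2.
Proof.
  intros h1 h2 h3 h4 hx.
  destruct (Rlt_dec 0 a) as [ha|ha].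
  - apply c2_L0; nra.
  - assert (hb : b > 0) by nra.
    destruct (c2_L0 b a c x) as [A B]; [lra| |lra|lra| |lra|].
    { apply Rnot_lt_le in ha. destruct ha; [lra|subst; nra]. }
    { nra. }
    split.
    + replace (a*x^2 + c*x + b) with (b + c*x + a*x^2) by ring. replace (a+b+c) with (b+a+c) by ring. exact B.
    + replace (a + c*x + b*x^2) with (b*x^2 + c*x + a) by ring. replace (a+b+c) with (b+a+c) by ring. exact A.
Qed.

Lemma c2_pos a b c x : a*b < 0 -> a + b > 0 -> Rabs c * (a+b) > -4*a*b -> x^2 <= 1 ->
  H a b c 1 1 x <= (a+b+Rabs c)^2 /\
  (a*x^2 + c*x + b)^2 <= (a+b+Rabs c)^2 /\ (a + c*x + b*x^2)^2 <= (a+b+Rabs c)^2.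
Proof.
  intros h1 h2 h3 hx.
  destruct (Rcase_abs c) as [hc|hc].
  - rewrite Rabs_left in * by lra.
    assert (hx2 : (-x)^2 <= 1) by nra.
    destruct (c2_norm a b (-c) (-x)) as [A B]; try lra.
    split; [|split].
    + replace (H a b c 1 1 x) with (H a b (-c) 1 1 (-x)) by (unfold H; ring).
      apply c2_T1; nra.
    + replace (a*x^2 + c*x + b) with (a*(-x)^2 + -c*(-x) + b) by ring. exact A.
    + replace (a + c*x + b*x^2) with (a + -c*(-x) + b*(-x)^2) by ring. exact B.
  - rewrite Rabs_pos_eq in * by lra.
    assert (c <> 0). { intro e; subst; nra. }
    destruct (c2_norm a b c x) as [A B]; try lra.
    split; [|split]; auto. apply c2_T1; nra.
Qed.

Lemma case2 a b c x : a*b < 0 -> Rabs (c*(a+b)) > 4 * Rabs (a*b) -> x^2 <= 1 ->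
  H a b c 1 1 x <= (Rabs (a+b) + Rabs c)^2 /\
  (a*x^2 + c*x + b)^2 <= (Rabs (a+b) + Rabs c)^2 /\ (a + c*x + b*x^2)^2 <= (Rabs (a+b) + Rabs c)^2.
Proof.
  intros h1 h2 hx.
  rewrite Rabs_mult in h2. rewrite (Rabs_left (a*b)) in h2 by lra.
  destruct (Rcase_abs (a+b)) as [s|s].
  - rewrite (Rabs_left (a+b)) in * by lra.
    destruct (c2_pos (-a) (-b) (-c) x) as [A [B C]].
    + nra.
    + lra.
    + rewrite Rabs_Ropp. nra.
    + lra.
    + rewrite Rabs_Ropp in *. split; [|split].
      * replace (H a b c 1 1 x) with (H (-a) (-b) (-c) 1 1 x) by (unfold H; ring).
        replace (- (a+b) + Rabs c) with (-a + -b + Rabs c) by ring. exact A.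
      * replace ((a*x^2 + c*x + b)^2) with ((-a*x^2 + -c*x + -b)^2) by ring.
        replace (- (a+b) + Rabs c) with (-a + -b + Rabs c) by ring. exact B.
      * replace ((a + c*x + b*x^2)^2) with ((-a + -c*x + -b*x^2)^2) by ring.
        replace (- (a+b) + Rabs c) with (-a + -b + Rabs c) by ring. exact C.
  - rewrite (Rabs_pos_eq (a+b)) in * by lra.
    assert (a + b <> 0). { intro e. rewrite e in h2. nra. }
    apply c2_pos; nra.
Qed.

Lemma lub_intro a b c N : 0 <= N ->
  (forall s t p, 0 <= s <= 1 -> 0 <= t <= 1 -> p^2 <= s*t -> H a b c s t p <= N^2) ->
  P2_values a b c N -> P2_norm a b c N.
Proof.
  intros hN hb hv. split.
  - intros r [z1 [z2 [h1 [h2 ->]]]].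
    unfold Cmod at 1. rewrite P2_sq.
    rewrite <- (sqrt_pow2 N hN). apply sqrt_le_1_alt. apply hb.
    + split; [nra|]. apply Cmod_le1; auto.
    + split; [nra|]. apply Cmod_le1; auto.
    + destruct z1 as [x1 y1], z2 as [x2 y2]; simpl. assert (0 <= (x1*y2 - y1*x2)^2) by apply pow2_ge_0. assert (E: (x1^2+y1^2)*(x2^2+y2^2) - (x1*x2+y1*y2)^2 = (x1*y2 - y1*x2)^2) by ring. lra.
  - intros u hu. apply hu. exact hv.
Qed.

Lemma Cmod_real r : Cmod (r, 0) = Rabs r.
Proof. unfold Cmod; simpl. replace (r^2 + 0^2) with (r^2) by ring. rewrite <- sqrt_Rsqr_abs. unfold Rsqr. f_equal. ring. Qed.

Lemma attain12 a b c : P2_values a b c (Rabs (a+b) + Rabs c).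
Proof.
  destruct (Rle_dec 0 (c*(a+b))) as [h|h].
  - exists (1,0), (1,0). rewrite !Cmod_real. rewrite Rabs_R1. split; [lra|split;[lra|]].
    unfold P2, Cadd, Cmul, RtoC; simpl.
    replace (a * (1 * 1 - 0 * 0) - 0 * (1 * 0 + 0 * 1) + (b * (1 * 1 - 0 * 0) - 0 * (1 * 0 + 0 * 1)) +
     (c * (1 * 1 - 0 * 0) - 0 * (1 * 0 + 0 * 1))) with ((a+b)+c) by ring.
    match goal with |- _ = Cmod (_, ?y) => replace y with 0 by ring end.
    rewrite Cmod_real.
    unfold Rabs; destruct (Rcase_abs (a+b)); destruct (Rcase_abs c); destruct (Rcase_abs (a+b+c)); nra.
  - exists (1,0), (-1,0). rewrite !Cmod_real. rewrite Rabs_R1. replace (Rabs (-1)) with 1 by (unfold Rabs; destruct (Rcase_abs (-1)); lra). split; [lra|split;[lra|]].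
    unfold P2, Cadd, Cmul, RtoC; simpl.
    match goal with |- _ = Cmod (?x, ?y) => replace y with 0 by ring; replace x with ((a+b)-c) by ring end.
    rewrite Cmod_real.
    unfold Rabs; destruct (Rcase_abs (a+b)); destruct (Rcase_abs c); destruct (Rcase_abs (a+b-c)); nra.
Qed.

Lemma case3_bound a b c s t p : a*b < 0 -> 0 <= s <= 1 -> 0 <= t <= 1 ->
  H a b c s t p <= (a-b)^2 * ((c^2 + 4*(-(a*b))) / (4*(-(a*b)))).
Proof.
  intros hab hs ht. set (k := -(a*b)). assert (hk : 0 < k) by (unfold k; lra).
  assert (E : 4*k*H a b c s t p = -(4*k*p - c*(a*s+b*t))^2 + (a*s-b*t)^2*(c^2+4*k))
    by (unfold H, k; ring).
  assert (S : (a*s-b*t)^2 <= (a-b)^2).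
  { destruct (Rlt_dec 0 a) as [ha|ha]; [assert (hb : b < 0) by nra|assert (hb : b > 0) by nra; assert (a < 0) by nra].
    - assert (0 <= a*s <= a) by (split; nra). assert (0 <= -b*t <= -b) by (split; nra).
      apply sq_le_of. split; nra.
    - assert (a <= a*s <= 0) by (split; nra). assert (-b <= -b*t <= 0) by (split; nra).
      replace ((a-b)^2) with ((b-a)^2) by ring. apply sq_le_of. split; nra. }
  assert (Q : 0 <= (4*k*p - c*(a*s+b*t))^2) by apply pow2_ge_0.
  assert (4*k*H a b c s t p <= (a-b)^2*(c^2+4*k)).
  { assert (0 <= c^2 + 4*k) by nra. nra. }
  apply (Rmult_le_reg_l (4*k)); [lra|].
  replace (4 * k * ((a - b) ^ 2 * ((c ^ 2 + 4 * k) / (4 * k)))) with ((a-b)^2*(c^2+4*k)) by (field; lra).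
  lra.
Qed.

Lemma N3_sq a b c : a*b < 0 ->
  ((Rabs a + Rabs b) * sqrt (1 + c ^ 2 / (4 * Rabs (a * b))))^2
  = (a-b)^2 * ((c^2 + 4*(-(a*b))) / (4*(-(a*b)))).
Proof.
  intros hab. rewrite (Rabs_left (a*b)) by lra.
  assert (0 <= c^2 / (4 * - (a*b))).
  { unfold Rdiv. apply Rmult_le_pos; [nra|]. apply Rlt_le, Rinv_0_lt_compat. lra. }
  rewrite Rpow_mult_distr, pow2_sqrt by lra.
  assert (E : (Rabs a + Rabs b)^2 = (a-b)^2).
  { destruct (Rlt_dec 0 a) as [ha|ha].
    - assert (hb : b < 0) by nra. rewrite (Rabs_pos_eq a), (Rabs_left b) by lra. ring.
    - assert (hb : b > 0) by nra. assert (a < 0) by nra.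
      rewrite (Rabs_left a), (Rabs_pos_eq b) by lra. ring. }
  rewrite E. field. split; intro e; subst; lra.
Qed.

Lemma attain3 a b c : a*b < 0 -> ~ (Rabs (c * (a + b)) > 4 * Rabs (a * b)) ->
  P2_values a b c ((Rabs a + Rabs b) * sqrt (1 + c ^ 2 / (4 * Rabs (a * b)))).
Proof.
  intros hab hn. set (k := -(a*b)). assert (hk : 0 < k) by (unfold k; lra).
  set (x := c*(a+b)/(4*k)).
  assert (hx : x^2 <= 1).
  { apply Rnot_gt_le in hn. rewrite (Rabs_left (a*b)) in hn by lra.
    assert (Rabs x <= 1).
    { unfold x. unfold Rdiv. rewrite Rabs_mult, Rabs_inv, (Rabs_pos_eq (4*k)) by lra.
      apply (Rmult_le_reg_r (4*k)); [lra|]. field_simplify; [|lra]. unfold k. lra. }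
    rewrite <- (sqabs x). assert (0 <= Rabs x) by apply Rabs_pos. nra. }
  exists (x, sqrt (1 - x^2)), (1, 0).
  assert (Cz : Cmod (x, sqrt (1 - x^2)) = 1).
  { unfold Cmod; cbn [fst snd]. rewrite pow2_sqrt by lra. replace (x^2 + (1 - x^2)) with 1 by ring. apply sqrt_1. }
  split; [lra|]. split; [rewrite Cmod_real, Rabs_R1; lra|].
  unfold Cmod at 1. rewrite P2_sq. cbn [fst snd].
  rewrite pow2_sqrt by lra.
  replace (x ^ 2 + (1 - x ^ 2)) with 1 by ring.
  replace (1 ^ 2 + 0 ^ 2) with 1 by ring.
  replace (x * 1 + sqrt (1 - x ^ 2) * 0) with x by ring.
  assert (E : H a b c 1 1 x = (a-b)^2 * ((c^2 + 4*(-(a*b))) / (4*(-(a*b))))).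
  { assert (E1 : 4*k*H a b c 1 1 x = -(4*k*x - c*(a*1+b*1))^2 + (a*1-b*1)^2*(c^2+4*k))
      by (unfold H, k; ring).
    assert (Z : 4*k*x - c*(a*1+b*1) = 0) by (unfold x; field; lra).
    apply (Rmult_eq_reg_l (4*k)); [|lra]. rewrite E1, Z. unfold k. field. split; intro e; rewrite e in hab; lra. }
  rewrite E, <- (N3_sq a b c hab). rewrite sqrt_pow2; auto.
  apply Rmult_le_pos; [|apply sqrt_pos]. assert (0 <= Rabs a) by apply Rabs_pos. assert (0 <= Rabs b) by apply Rabs_pos. lra.
Qed.

Theorem mainTheorem11 (a b c : R) :
  ((a * b >= 0 \/ Rabs (c * (a + b)) > 4 * Rabs (a * b)) ->
     P2_norm a b c (Rabs (a + b) + Rabs c)) /\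
  (~ (a * b >= 0 \/ Rabs (c * (a + b)) > 4 * Rabs (a * b)) ->
     P2_norm a b c
       ((Rabs a + Rabs b) * sqrt (1 + c ^ 2 / (4 * Rabs (a * b))))).
Proof.
  assert (N0 : 0 <= Rabs (a+b) + Rabs c).
  { assert (0 <= Rabs (a+b)) by apply Rabs_pos. assert (0 <= Rabs c) by apply Rabs_pos. lra. }
  split.
  - intros [h|h]; apply lub_intro; auto; try apply attain12.
    + apply reduction; intros x hx.
      * apply case1_T1; auto.
      * apply case1_R; auto.
      * apply case1_R2; auto.
    + destruct (Rlt_dec (a*b) 0) as [hab|hab].
      * apply reduction; intros x hx; apply (case2 a b c x hab h hx).
      * apply reduction; intros x hx.
        -- apply case1_T1; auto; lra.
        -- apply case1_R; auto; lra.
        -- apply case1_R2; auto; lra.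
  - intros hn. assert (hab : a*b < 0) by (apply Rnot_ge_lt; tauto).
    apply lub_intro.
    + apply Rmult_le_pos; [|apply sqrt_pos]. assert (0 <= Rabs a) by apply Rabs_pos. assert (0 <= Rabs b) by apply Rabs_pos. lra.
    + intros s t p hs ht hp. rewrite N3_sq by auto. apply case3_bound; auto.
    + apply attain3; tauto.
Qed.
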